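(* Let $R$ be a $*$-ring and $I$ an ideal of $R$ with $I^*\subseteq I$ and $I\subseteq J(R)$. Then $R$ is strongly $J$-$*$-clean if and only if (1) $R/I$ (with the induced involution $(a+I)^*=a^*+I$) is strongly $J$-$*$-clean; (2) $R$ is abelian; and (3) every idempotent lifts modulo $I$.
   Context: All rings are associative with identity. A $*$-ring is a ring $R$ with an involution $*$, i.e. a map $a\mapsto a^*$ with $(a+b)^*=a^*+b^*$, $(ab)^*=b^*a^*$, $(a^* )^*=a$. $J(R)$ denotes the Jacobson radical of $R$. A projection is an element $e$ with $e^2=e=e^*$. A $*$-ring $R$ is strongly $J$-$*$-clean if every $a\in R$ can be written $a=e+u$ with $e$ a projection, $u\in J(R)$ and $ae=ea$. A ring is abelian if all its idempotents are central. Idempotents lift modulo $I$ means: for every $x\in R$ with $x-x^2\in I$ there is an idempotent $f\in R$ with $x-f\in I$. *)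

(* Defs.v *)
From HB Require Import structures.
From mathcomp Require Import all_boot all_algebra.
From mathcomp Require Import generic_quotient.

Set Implicit Arguments.
Unset Strict Implicit.
Unset Printing Implicit Defensive.

Import GRing.Theory.
Local Open Scope ring_scope.
Local Open Scope quotient_scope.

Definition is_involution (R : pzRingType) (star : R -> R) : Prop :=
  [/\ forall a b, star (a + b) = star a + star b,
      forall a b, star (a * b) = star b * star a &
      forall a, star (star a) = a].

Definition is_left_ideal (S : pzRingType) (M : S -> Prop) : Prop :=
  [/\ M 0,
      forall x y, M x -> M y -> M (x + y),
      forall x, M x -> M (- x) &
      forall r x, M x -> M (r * x)].

Definition is_maximal_left_ideal (S : pzRingType) (M : S -> Prop) : Prop :=
  [/\ is_left_ideal M, ~ M 1 &
      forall N : S -> Prop, is_left_ideal N -> ~ N 1 ->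
        (forall x, M x -> N x) -> forall x, N x -> M x].

Definition jacobson (S : pzRingType) (x : S) : Prop :=
  forall M : S -> Prop, is_maximal_left_ideal M -> M x.

Definition is_projection (S : pzRingType) (star : S -> S) (e : S) : Prop :=
  e * e = e /\ star e = e.

Definition strongly_J_star_clean (S : pzRingType) (star : S -> S) : Prop :=
  forall a : S, exists e u : S,
    [/\ is_projection star e, jacobson u, a = e + u & a * e = e * a].

Definition abelian_ring (S : pzRingType) : Prop :=
  forall e : S, e * e = e -> forall x : S, e * x = x * e.

Record tsideal (R : pzRingType) := TSIdeal {
  idpred : {pred R};
  tsideal0 : 0 \in idpred;
  tsidealB : forall x y, x \in idpred -> y \in idpred -> x - y \in idpred;
  tsidealMl : forall r x, x \in idpred -> r * x \in idpred;
  tsidealMr : forall r x, x \in idpred -> x * r \in idpred }.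

Definition idempotents_lift (R : pzRingType) (I : tsideal R) : Prop :=
  forall x : R, x - x * x \in idpred I ->
    exists f : R, f * f = f /\ x - f \in idpred I.

Module TSQuot.
Section Zmod.
Variables (R : pzRingType) (I : tsideal R).
Local Notation P := (idpred I).

Lemma tsidealD x y : x \in P -> y \in P -> x + y \in P.
Proof.
move=> hx hy; have h0 := tsidealB (tsideal0 I) hy.
by have := tsidealB hx h0; rewrite sub0r opprK.
Qed.

Lemma tsidealN x : x \in P -> - x \in P.
Proof. by move=> hx; have := tsidealB (tsideal0 I) hx; rewrite sub0r. Qed.

Definition equiv (x y : R) := (x - y) \in P.

Lemma equiv_is_equiv : equiv_class_of equiv.
Proof.
split=> [x|x y|y x z]; rewrite /equiv.
- by rewrite subrr tsideal0.
- apply/idP/idP => h; by rewrite -opprB tsidealN.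
- move=> h1 h2; have -> : x - z = (x - y) + (y - z) by rewrite addrA addrNK.
  by apply: tsidealD.
Qed.

Canonical equiv_equiv := EquivRelPack equiv_is_equiv.
Canonical equiv_encModRel := defaultEncModRel equiv.

Definition quot := {eq_quot equiv}.

#[export] HB.instance Definition _ : EqQuotient R equiv quot := EqQuotient.on quot.
#[export] HB.instance Definition _ := Choice.on quot.

Lemma equivP x y : (x == y %[mod quot]) = (x - y \in P).
Proof. by rewrite piE. Qed.

Definition zero : quot := lift_cst quot 0.
Definition add := lift_op2 quot +%R.
Definition opp := lift_op1 quot -%R.

Canonical pi_zero_morph := PiConst zero.

Lemma pi_opp : {morph \pi : x / - x >-> opp x}.
Proof.
move=> x; unlock opp; apply/eqP; rewrite equivP.
have := reprK (\pi_quot x); move/eqP; rewrite eqmodE /= => h.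
by rewrite opprK addrC.
Qed.
Canonical pi_opp_morph := PiMorph1 pi_opp.

Lemma pi_add : {morph \pi : x y / x + y >-> add x y}.
Proof.
move=> x y /=; unlock add; apply/eqP; rewrite equivP.
have := reprK (\pi_quot x); move/eqP; rewrite eqmodE /= => hx.
have := reprK (\pi_quot y); move/eqP; rewrite eqmodE /= => hy.
move: (repr _) (repr _) hx hy => a b hx hy.
have -> : x + y - (b + a) = - ((b - x) + (a - y)).
  by rewrite [RHS]opprD !opprB addrACA opprD.
by apply/tsidealN/tsidealD.
Qed.
Canonical pi_add_morph := PiMorph2 pi_add.

Lemma addqA : associative add.
Proof. by move=> x y z; rewrite -[x]reprK -[y]reprK -[z]reprK !piE addrA. Qed.
Lemma addqC : commutative add.
Proof. by move=> x y; rewrite -[x]reprK -[y]reprK !piE addrC. Qed.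
Lemma add0q : left_id zero add.
Proof. by move=> x; rewrite -[x]reprK !piE add0r. Qed.
Lemma addNq : left_inverse zero opp add.
Proof. by move=> x; rewrite -[x]reprK !piE addNr. Qed.

#[export] HB.instance Definition _ := GRing.isZmodule.Build quot addqA addqC add0q addNq.

Definition one : quot := lift_cst quot 1.
Definition mul := lift_op2 quot *%R.
Canonical pi_one_morph := PiConst one.

Lemma pi_mul : {morph \pi : x y / x * y >-> mul x y}.
Proof.
move=> x y /=; unlock mul; apply/eqP; rewrite equivP.
have := reprK (\pi_quot x); move/eqP; rewrite eqmodE /= => hx.
have := reprK (\pi_quot y); move/eqP; rewrite eqmodE /= => hy.
move: (repr _) (repr _) hx hy => b a hx hy.
have e : (a - x) * y + a * (b - y) = a * b - x * y.
  by rewrite mulrBl mulrBr addrC addrA subrK.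
rewrite -opprB -e; apply: tsidealN; apply: tsidealD; [exact: tsidealMr | exact: tsidealMl].
Qed.
Canonical pi_mul_morph := PiMorph2 pi_mul.

Lemma mulqA : associative mul.
Proof. by move=> x y z; rewrite -[x]reprK -[y]reprK -[z]reprK !piE mulrA. Qed.
Lemma mul1q : left_id one mul.
Proof. by move=> x; rewrite -[x]reprK !piE mul1r. Qed.
Lemma mulq1 : right_id one mul.
Proof. by move=> x; rewrite -[x]reprK !piE mulr1. Qed.
Lemma mulqDl : left_distributive mul +%R.
Proof.
move=> x y z; rewrite -[x]reprK -[y]reprK -[z]reprK.
by rewrite !piE mulrDl.
Qed.
Lemma mulqDr : right_distributive mul +%R.
Proof.
move=> x y z; rewrite -[x]reprK -[y]reprK -[z]reprK.
by rewrite !piE mulrDr.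
Qed.

#[export] HB.instance Definition _ :=
  GRing.Zmodule_isPzRing.Build quot mulqA mul1q mulq1 mulqDl mulqDr.

Definition pi (x : R) : quot := \pi_quot x.

Definition star (s : R -> R) (x : quot) : quot := \pi_quot (s (repr x)).

End Zmod.
Module Exports. HB.reexport. End Exports.
End TSQuot.
Export TSQuot.Exports.

Notation "{ 'tsquot' I }" := (TSQuot.quot I) (format "{ 'tsquot'  I }").

(* Main.v *)
Require Import Defs.
From HB Require Import structures.
From mathcomp Require Import all_boot all_algebra generic_quotient.
From mathcomp Require Import boolp classical_sets.
From Stdlib Require Import Classical.
Set Implicit Arguments.
Unset Strict Implicit.
Import GRing.Theory.
Local Open Scope ring_scope.
Local Open Scope quotient_scope.

Lemma exists_max (S : pzRingType) (L : S -> Prop) :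
  is_left_ideal L -> ~ L 1 ->
  exists M, is_maximal_left_ideal M /\ forall x, L x -> M x.
Proof.
move=> [L0 LD LN LM] L1.
pose U (X : S -> Prop) := fun x => X x \/ L x.
pose P := fun X : set S => is_left_ideal (U X) /\ ~ U X 1.
have [] := @Zorn_bigcup S P.
  move=> F FP Ftot.
  have key : forall x y, U (bigcup F id) x -> U (bigcup F id) y ->
     exists X, (F X \/ X = (fun _ => False)) /\ U X x /\ U X y.
    move=> x y [[X FX Xx]|Lx] [[Y FY Yy]|Ly].
    - have [XY|YX] := Ftot _ _ FX FY.
        by exists Y; split; [left|split; [left; apply: XY|left]].
      by exists X; split; [left|split; [left|left; apply: YX]].
    - by exists X; split; [left|split; [left|right]].
    - by exists Y; split; [left|split; [right|left]].
    - by exists (fun _ => False); split; [right|split; right].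
  have PX : forall X, F X \/ X = (fun _ => False) -> P X.
    move=> X [/FP//|->]; split; last by case.
    by split=> [|x y|x|r x]; try (case=> //; fail); [right | case=> //=; move=> ? [] // ? ; right; apply: LD | case=> // ?; right; apply: LN | case=> // ?; right; apply: LM].
  have sub : forall X, F X \/ X = (fun _ => False) -> forall z, U X z -> U (bigcup F id) z.
    by move=> X [FX|->] z [Xz|Lz]; [left; exists X|right|case: Xz|right].
  split; [split|].
  - by right.
  - move=> x y hx hy; have [X [FX [hx' hy']]] := key _ _ hx hy.
    have [[_ hD _ _] _] := PX _ FX; exact: (sub _ FX _ (hD _ _ hx' hy')).
  - move=> x hx; have [X [FX [hx' _]]] := key _ _ hx hx.
    have [[_ _ hN _] _] := PX _ FX; exact: (sub _ FX _ (hN _ hx')).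
  - move=> r x hx; have [X [FX [hx' _]]] := key _ _ hx hx.
    have [[_ _ _ hM] _] := PX _ FX; exact: (sub _ FX _ (hM _ _ hx')).
  - move=> h1; have [X [FX [h _]]] := key _ _ h1 h1.
    by have [_ ] := PX _ FX.
move=> A [[PA PA1] Amax].
exists (U A); split; last by move=> x; right.
split=> // N HN N1 AN x Nx.
apply: NNPP => nAx; apply: (Amax N).
  by split=> [z Az|]; [apply: AN; left|move=> h; apply: nAx; left; apply: h].
split=> //; last by move=> [//|Lz]; apply: N1.
have e : U N = N.
  by apply: funext => z; apply: propext; split=> [[//|Lz]|]; [apply: AN; right|left].
by rewrite e.
Qed.

Lemma jac_linv (S : pzRingType) (j : S) : jacobson j -> exists v, v * (1 - j) = 1.
Proof.
move=> Jj; apply: NNPP => H.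
pose L := fun x : S => exists r, x = r * (1 - j).
have LI : is_left_ideal L.
  split; [exists 0; by rewrite mul0r| move=> x y [a ->] [b ->]; exists (a + b); by rewrite mulrDl
        | move=> x [a ->]; exists (- a); by rewrite mulNr | move=> r x [a ->]; exists (r * a); by rewrite mulrA].
have [M [Mmax LM]] := exists_max LI (fun '(ex_intro r e) => H (ex_intro _ r (esym e))).
have Mj := Jj _ Mmax.
case: Mmax => [[M0 MD MN MM] M1 _].
apply: M1; have := MD _ _ (LM (1 - j) (ex_intro _ 1 (esym (mul1r _)))) Mj.
by rewrite subrK.
Qed.
Section Q.
Variables (R : pzRingType) (I : tsideal R).
Local Notation pi := (TSQuot.pi I).

Lemma pi_addE x y : pi (x + y) = pi x + pi y.
Proof. exact: TSQuot.pi_add. Qed.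
Lemma pi_mulE x y : pi (x * y) = pi x * pi y.
Proof. exact: TSQuot.pi_mul. Qed.
Lemma pi_oppE x : pi (- x) = - pi x.
Proof. exact: TSQuot.pi_opp. Qed.
Lemma pi_1 : pi 1 = 1.
Proof. by rewrite /pi [RHS]/GRing.one /= /TSQuot.one -lock. Qed.
Lemma pi_eq x y : (pi x = pi y) <-> (x - y \in idpred I).
Proof. rewrite -TSQuot.equivP; split; [by move=> h; apply/eqP | by move/eqP]. Qed.
Lemma pi_repr q : pi (repr q) = q.
Proof. exact: reprK. Qed.
End Q.

Section JL.
Variable S : pzRingType.
Lemma J_mull (r x : S) : jacobson x -> jacobson (r * x).
Proof. by move=> hx M hM; case: (hM) => [[_ _ _ h] _ _]; apply: h; apply: hx. Qed.
Lemma J_add (x y : S) : jacobson x -> jacobson y -> jacobson (x + y).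
Proof. by move=> hx hy M hM; case: (hM) => [[_ h _ _] _ _]; apply: h; [apply: hx|apply: hy]. Qed.
Lemma J_opp (x : S) : jacobson x -> jacobson (- x).
Proof. by move=> hx M hM; case: (hM) => [[_ _ h _] _ _]; apply: h; apply: hx. Qed.

Lemma idemJ0 (p : S) : p * p = p -> jacobson p -> p = 0.
Proof.
move=> pp Jp; have [v hv] := jac_linv Jp.
by rewrite -[p]mul1r -hv -mulrA mulrBl mul1r pp subrr mulr0.
Qed.

Lemma comm_idem_eq (e f : S) : e * e = e -> f * f = f -> e * f = f * e ->
  jacobson (e - f) -> e = f.
Proof.
move=> ee ff ef J.
have a : e * f * e = e * f by rewrite -mulrA -ef mulrA ee.
have b : e * (e * f) = e * f by rewrite mulrA ee.
have c : e * f * (e * f) = e * f by rewrite mulrA a -mulrA ff.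
have a' : f * e * f = f * e by rewrite -mulrA ef mulrA ff.
have b' : f * (f * e) = f * e by rewrite mulrA ff.
have c' : f * e * (f * e) = f * e by rewrite mulrA a' -mulrA ee.
have h1 : e = e * f.
  apply/eqP; rewrite -subr_eq0; apply/eqP; apply: idemJ0; last first.
    by have := J_mull e J; rewrite mulrBr ee.
  by rewrite mulrBr !mulrBl ee a b c subrr subr0.
have h2 : f = f * e.
  apply/eqP; rewrite -subr_eq0; apply/eqP; apply: idemJ0; last first.
    by have := J_mull f (J_opp J); rewrite opprB mulrBr ff.
  by rewrite mulrBr !mulrBl ff a' b' c' subrr subr0.
by rewrite h1 ef -h2.
Qed.
End JL.

Section Star.
Variables (S : pzRingType) (star : S -> S).
Hypothesis inv : is_involution star.

Lemma star0 : star 0 = 0.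
Proof.
case: inv => hD _ _; have := hD 0 0; rewrite addr0 => h.
by apply: (addrI (star 0)); rewrite -h addr0.
Qed.
Lemma starN x : star (- x) = - star x.
Proof.
case: inv => hD _ _; by apply: (addrI (star x)); rewrite -hD !subrr star0.
Qed.
Lemma starB x y : star (x - y) = star x - star y.
Proof. by case: inv => hD _ _; rewrite hD starN. Qed.

Lemma idem_proj : strongly_J_star_clean star ->
  forall e : S, e * e = e -> star e = e.
Proof.
move=> H e ee; have [f [u [[ff sf] Ju he hc]]] := H e.
have Jef : jacobson (e - f) by rewrite he addrC addKr.
by rewrite (comm_idem_eq ee ff hc Jef).
Qed.

Lemma star1 : star 1 = 1.
Proof.
case: inv => _ hM hI; have := hM (star 1) 1; rewrite !mulr1 hI => h.
by move: h; rewrite mulr1 => <-.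
Qed.

Lemma abelian_of : strongly_J_star_clean star -> abelian_ring S.
Proof.
move=> H e ee x; have sP := idem_proj H.
case: inv => hD hM hI.
have e1 : e * (1 - e) = 0 by rewrite mulrBr mulr1 ee subrr.
have e2 : (1 - e) * e = 0 by rewrite mulrBl mul1r ee subrr.
have s1e : star (1 - e) = 1 - e by rewrite starB star1 sP.
pose y := e * x * (1 - e).
have y1 : y = 0.
  have gg : (e + y) * (e + y) = e + y.
    rewrite mulrDl !mulrDr ee /y !mulrA ee.
    by rewrite -[e * x * (1 - e) * e]mulrA e2 mulr0 !mul0r !addr0.
  have := sP _ gg; rewrite hD (sP _ ee) /y !hM s1e (sP _ ee) => /addrI h.
  by have := congr1 (fun z => e * z) h; rewrite /= mulrA e1 mul0r !mulrA ee => <-.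
pose y' := (1 - e) * x * e.
have y2 : y' = 0.
  have gg : (e + y') * (e + y') = e + y'.
    rewrite mulrDl !mulrDr ee /y' !mulrA e1 !mul0r -!(mulrA _ e) ee addr0.
    by rewrite e1 mulr0 !mul0r !addr0.
  have := sP _ gg; rewrite hD (sP _ ee) /y' !hM s1e (sP _ ee) => /addrI h.
  by have := congr1 (fun z => z * e) h; rewrite /= -!mulrA e2 !mulr0 ee => <-.
have : y = y' by rewrite y1 y2.
rewrite /y /y' !mulrBr !mulrBl !mulr1 !mul1r; exact: addIr.
Qed.
End Star.

Section QJ.
Variables (R : pzRingType) (I : tsideal R).
Local Notation pi := (TSQuot.pi I).
Local Notation Q := (TSQuot.quot I).

Lemma pi_0 : pi 0 = 0.
Proof. by apply: (addrI (pi 0)); rewrite -pi_addE !addr0. Qed.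
Lemma pi_subE x y : pi (x - y) = pi x - pi y.
Proof. by rewrite pi_addE pi_oppE. Qed.

Lemma preim_ideal (M : Q -> Prop) : is_left_ideal M -> is_left_ideal (fun x => M (pi x)).
Proof.
case=> M0 MD MN MM; split=> [|x y hx hy|x hx|r x hx].
- by rewrite pi_0.
- by rewrite pi_addE; apply: MD.
- by rewrite pi_oppE; apply: MN.
- by rewrite pi_mulE; apply: MM.
Qed.

Lemma im_ideal (N : R -> Prop) : is_left_ideal N ->
  is_left_ideal (fun y => exists n, N n /\ pi n = y).
Proof.
case=> N0 ND NN NM; split=> [|x y [a [ha <-]] [b [hb <-]]|x [a [ha <-]]|r x [a [ha <-]]].
- by exists 0; rewrite pi_0.
- by exists (a + b); rewrite pi_addE; split => //; apply: ND.
- by exists (- a); rewrite pi_oppE; split => //; apply: NN.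
- by exists (repr r * a); rewrite pi_mulE pi_repr; split => //; apply: NM.
Qed.

Lemma im_not1 (N : R -> Prop) : is_left_ideal N -> ~ N 1 ->
  (forall i, i \in idpred I -> N i) -> ~ (exists n, N n /\ pi n = 1).
Proof.
case=> N0 ND NN NM N1 IN [n [hn]]; rewrite -pi_1 => /pi_eq /IN h.
by apply: N1; have := ND _ _ hn (NN _ h); rewrite opprB addrC subrK.
Qed.

Lemma J_pi u : jacobson u -> jacobson (pi u).
Proof.
move=> Ju M [HM M1 Mmax].
have PM : is_maximal_left_ideal (fun x => M (pi x)).
  split; first exact: preim_ideal.
    by rewrite pi_1.
  move=> N HN N1 MN x Nx.
  have IN : forall i, i \in idpred I -> N i.
    move=> i hi; apply: MN; have -> : pi i = 0 by rewrite -pi_0; apply/pi_eq; rewrite subr0.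
    by case: HM.
  have := Mmax _ (im_ideal HN) _ _ (pi x) (ex_intro _ x (conj Nx erefl)); apply.
    exact: im_not1 HN N1 IN.
  by move=> y My; exists (repr y); rewrite pi_repr; split=> //; apply: MN; rewrite pi_repr.
exact: (Ju _ PM).
Qed.

Lemma J_unpi u : (forall x, x \in idpred I -> jacobson x) -> jacobson (pi u) -> jacobson u.
Proof.
move=> IJ Ju M MM; have [HM M1 Mmax] := MM.
have IM : forall i, i \in idpred I -> M i by move=> i hi; apply: IJ.
have IMI : is_maximal_left_ideal (fun y => exists m, M m /\ pi m = y).
  split; first exact: im_ideal.
    exact: im_not1 HM M1 IM.
  move=> N HN N1 MN y Ny.
  have := Mmax _ (preim_ideal HN) _ _ (repr y); rewrite pi_repr => h.
  exists (repr y); split; last exact: pi_repr.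
  apply: h => //; first by rewrite pi_1.
  by move=> x Mx; apply: MN; exists x.
have [m [hm /pi_eq hi]] := Ju _ IMI.
case: HM => _ MD MN _.
by have := MD _ _ hm (MN _ (IM _ hi)); rewrite opprB addrC subrK.
Qed.

Lemma star_pi (star : R -> R) : is_involution star ->
  (forall x : R, x \in idpred I -> star x \in idpred I) ->
  forall x, @TSQuot.star R I star (pi x) = pi (star x).
Proof.
move=> inv sI x; rewrite /TSQuot.star; apply/pi_eq.
rewrite -(starB inv); apply: sI; apply/pi_eq; exact: pi_repr.
Qed.
End QJ.

Lemma zm1 (V : zmodType) (a b c d : V) : a + b - (a + c + (c + d)) + c + c = b - d.
Proof.
rewrite !opprD !addrA (addrC a b) addrK.
by rewrite (addrAC _ (- d)) subrK (addrAC _ (- d)) subrK.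
Qed.

Lemma lift_step (R : pzRingType) (I : tsideal R) (x e u : R) :
  e * e = e -> jacobson u -> x = e + u -> x * e = e * x ->
  x - x * x \in idpred I -> u \in idpred I.
Proof.
move=> ee Ju -> hc hd.
have ue : u * e = e * u.
  by move: hc; rewrite mulrDl mulrDr ee => /addrI.
have ed : e * ((e + u) - (e + u) * (e + u)) = - ((1 + u) * (e * u)).
  rewrite ?(mulrDl, mulrDr, mulrBl, mulrBr, mulNr, mulrN, mul1r, mulr1, opprD, mulrA).
  by rewrite ?ee ue ?ee -(mulrA e u e) ue mulrA ee -(opprD e (e * u)) addNKr.
have sq : (e + u) * (e + u) = e + e * u + (e * u + u * u).
  by rewrite mulrDl !mulrDr ee ue.
have euI : e * u \in idpred I.
  have := tsidealMl e hd; rewrite ed => /TSQuot.tsidealN; rewrite opprK => h.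
  have [v hv] := jac_linv (J_opp Ju); rewrite opprK in hv.
  by rewrite -[e * u]mul1r -hv -mulrA; apply: tsidealMl.
have h2 : (1 - u) * u \in idpred I.
  rewrite mulrBl mul1r -(zm1 e u (e * u) (u * u)) -sq.
  by apply: TSQuot.tsidealD => //; apply: TSQuot.tsidealD.
have [v hv] := jac_linv Ju.
by rewrite -[u]mul1r -hv -mulrA; apply: tsidealMl.
Qed.

Theorem theorem3p7 (R : pzRingType) (star : R -> R) (I : tsideal R) :
  is_involution star ->
  (forall x : R, x \in idpred I -> star x \in idpred I) ->
  (forall x : R, x \in idpred I -> jacobson x) ->
  (strongly_J_star_clean star <->
   [/\ strongly_J_star_clean (@TSQuot.star R I star),
       abelian_ring R &
       idempotents_lift I]).
Proof.
move=> inv sI IJ; split.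
  move=> H; split.
  - move=> q; have [e [u [[ee se] Ju ha hc]]] := H (repr q).
    exists (TSQuot.pi I e), (TSQuot.pi I u); split.
    + split; first by rewrite -pi_mulE ee.
      by rewrite star_pi // se.
    + exact: J_pi.
    + by rewrite -pi_addE -ha pi_repr.
    + by rewrite -(pi_repr q) -!pi_mulE hc.
  - exact: abelian_of inv H.
  - move=> x hx; have [e [u [[ee se] Ju ha hc]]] := H x.
    exists e; split => //.
    rewrite {1}ha addrC addKr; exact: lift_step ee Ju ha hc hx.
move=> [HQ ab lift] a.
have [eps [w [[epe sepe] Jw ha hc]]] := HQ (TSQuot.pi I a).
have hx : repr eps - repr eps * repr eps \in idpred I.
  rewrite -opprB; apply: TSQuot.tsidealN; apply/pi_eq.
  by rewrite pi_mulE pi_repr epe.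
have [f [ff /pi_eq hf]] := lift _ hx.
rewrite pi_repr in hf.
have sff : star f * star f = star f by case: inv => _ hM _; rewrite -hM ff.
have sf : star f = f.
  apply: (comm_idem_eq sff ff); first exact: (ab _ sff).
  apply: IJ; apply/(@pi_eq _ I); by rewrite -star_pi // -hf sepe.
exists f, (a - f); split.
- by [].
- apply: (J_unpi IJ); rewrite pi_subE -hf ha addrC addKr //.
- by rewrite addrC subrK.
- by rewrite (ab _ ff).
Qed.
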